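(* Let $b\in\mathbb R^d\setminus\{0\}$ and $\lambda_1\ge\dots\ge\lambda_d>0$. Define $F(y)=-\sum_{i=1}^d|b_i|\sqrt{y_i}-\sqrt{\sum_{i=1}^d\lambda_i^{-1}y_i}$, $B_i=b_i^2(\|b\|_2+\lambda_d^{-1/2})^{-2}$, $\mathcal I=\{i\in[d]:b_i\neq0\}$, $D_F=\{y\in\mathbb R^d:y_i>B_i\ \forall i\in[d],\ \sum_{i=1}^dy_i<1\}$, $$t_0=9\max\Big(\max_{i\in\mathcal I}(b_i^2B_i)^{-1/2},\ \min_{i\in\mathcal I}(\lambda_i^{-1}B_i)^{-1/2}\Big),$$ and for $t>0$, $F^{(t)}(y)=tF(y)-\sum_{i=1}^d\log(y_i-B_i)-\log\big(1-\sum_{i=1}^dy_i\big)$. Then for all $t\ge t_0$, $F^{(t)}$ is self-concordant on $D_F$.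
   Context: A function $G$ satisfies the self-concordance differential inequality on $D\subset\mathbb R^d$ if for every $z\in D$ and $h\in\mathbb R^d$, $|D^3G(z)[h,h,h]|\le2\,(D^2G(z)[h,h])^{3/2}$, where $D^kG(z)[h,\dots,h]$ is the $k$-th directional derivative. $G$ defined on $D$ is self-concordant if it satisfies this inequality on $D$ and $G(z)\to+\infty$ as $z\to\partial D$. *)

(* Defs.v *)
From HB Require Import structures.
From mathcomp Require Import all_boot all_order all_algebra.
From mathcomp Require Import all_classical all_reals all_analysis.
Set Implicit Arguments. Unset Strict Implicit. Unset Printing Implicit Defensive.
Import Order.TTheory GRing.Theory Num.Theory.
Import numFieldNormedType.Exports.
Local Open Scope classical_set_scope.
Local Open Scope ring_scope.

Section SC.
Variables (R : realType) (d : nat).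
Notation vec := ('I_d -> R).

Definition line_fun (G : vec -> R) (z h : vec) : R -> R :=
  fun s => G (fun i => z i + s * h i).

Definition dirD1 G z h : R := derive1 (line_fun G z h) 0.
Definition dirD2 G z h : R := derive1 (derive1 (line_fun G z h)) 0.
Definition dirD3 G z h : R := derive1 (derive1 (derive1 (line_fun G z h))) 0.

Definition sc_inequality (G : vec -> R) (D : set vec) : Prop :=
  forall z, D z -> forall h : vec,
    [/\ derivable (line_fun G z h) 0 1,
        derivable (derive1 (line_fun G z h)) 0 1,
        derivable (derive1 (derive1 (line_fun G z h))) 0 1 &
        `| dirD3 G z h | <= 2 * (Num.sqrt (dirD2 G z h)) ^+ 3].

(* closure / interior of D w.r.t. the (product = norm) topology of R^d,
   via coordinatewise eps-balls *)
Definition in_closure (D : set vec) (p : vec) : Prop :=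
  forall eps : R, 0 < eps -> exists z, D z /\ forall i, `| z i - p i | < eps.
Definition in_interior (D : set vec) (p : vec) : Prop :=
  exists2 eps : R, 0 < eps & forall z, (forall i, `| z i - p i | < eps) -> D z.

Definition blowup_at_boundary (G : vec -> R) (D : set vec) : Prop :=
  forall p, in_closure D p -> ~ in_interior D p ->
    forall M : R, exists2 eps : R, 0 < eps &
      forall z, D z -> (forall i, `| z i - p i | < eps) -> M < G z.

Definition self_concordant (G : vec -> R) (D : set vec) : Prop :=
  sc_inequality G D /\ blowup_at_boundary G D.

End SC.

Section Lemma2Defs.
Variables (R : realType) (n : nat).
(* the dimension is d = n.+1 (b <> 0 forces d >= 1); lambda_d = lam ord_max *)
Notation vec := ('I_n.+1 -> R).
Variables (b lam : vec).

Definition norm2 (v : vec) : R := Num.sqrt (\sum_(i < n.+1) v i ^+ 2).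

Definition Fobj (y : vec) : R :=
  - (\sum_(i < n.+1) `| b i | * Num.sqrt (y i))
  - Num.sqrt (\sum_(i < n.+1) (lam i)^-1 * y i).

Definition Bc (i : 'I_n.+1) : R :=
  b i ^+ 2 * ((norm2 b + (Num.sqrt (lam ord_max))^-1) ^+ 2)^-1.

Definition Iset : set 'I_n.+1 := [set i | b i != 0].

Definition DF : set vec :=
  [set y | (forall i, Bc i < y i) /\ \sum_(i < n.+1) y i < 1].

Definition t0 : R :=
  9 * Num.max
        (sup [set (Num.sqrt (b i ^+ 2 * Bc i))^-1 | i in Iset])
        (inf [set (Num.sqrt ((lam i)^-1 * Bc i))^-1 | i in Iset]).

Definition Ft (t : R) (y : vec) : R :=
  t * Fobj y - \sum_(i < n.+1) ln (y i - Bc i) - ln (1 - \sum_(i < n.+1) y i).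

End Lemma2Defs.

(* Main.v *)
Require Import Defs.
From HB Require Import structures.
From mathcomp Require Import all_boot all_order all_algebra.
From mathcomp Require Import all_classical all_reals all_analysis.
From mathcomp Require Import ring lra.
Import Order.TTheory GRing.Theory Num.Theory.
Local Open Scope ring_scope.

Module Helpers.
Import numFieldNormedType.Exports.
Set Implicit Arguments. Unset Strict Implicit. Unset Printing Implicit Defensive.
Local Open Scope classical_set_scope.
Local Open Scope ring_scope.

Section Aux.
Variable R : realType.

Definition D3 (f f1 f2 f3 : R -> R) := \forall s \near (0:R),
  is_derive s (1:R) f (f1 s) /\ is_derive s (1:R) f1 (f2 s) /\ is_derive s (1:R) f2 (f3 s).

Lemma D3_sc f f1 f2 f3 : D3 f f1 f2 f3 ->
  [/\ derivable f 0 1, derivable (derive1 f) 0 1, derivable (derive1 (derive1 f)) 0 1,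
      derive1 (derive1 f) 0 = f2 0 & derive1 (derive1 (derive1 f)) 0 = f3 0].
Proof.
move=> H.
have H1 : \forall s \near (0:R), f1 s = derive1 f s.
  by apply: filterS H => s [[_ dv] _]; rewrite derive1E dv.
have H2 : \forall s \near (0:R), f2 s = derive1 (derive1 f) s.
  apply: filterS (TopologicalNumDomainType.nbhs_nbhs H) => s Hs.
  have E : \forall x \near s, derive1 f x = f1 x.
    by apply: filterS Hs => x [[_ dv] _]; rewrite derive1E dv.
  rewrite derive1E (near_eq_derive _ E).
  by have [_ [[_ dv] _]] := nbhs_singleton Hs; rewrite dv.
have [[df _] [[df1 _] [df2 _]]] := nbhs_singleton H.
split.
- exact: df.
- exact: near_eq_derivable H1 df1.
- exact: near_eq_derivable H2 df2.
- by rewrite -(nbhs_singleton H2).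
- have E : \forall x \near (0:R), derive1 (derive1 f) x = f2 x.
    by apply: filterS H2 => x ->.
  rewrite derive1E (near_eq_derive _ E).
  by have [_ [_ [_ dv]]] := nbhs_singleton H; rewrite dv.
Qed.

Definition SCat (f : R -> R) := exists f1 f2 f3, D3 f f1 f2 f3 /\
  0 <= f2 0 /\ `|f3 0| <= 2 * Num.sqrt (f2 0) ^+ 3.

Lemma sqrt3_add (x y : R) : 0 <= x -> 0 <= y ->
  Num.sqrt x ^+ 3 + Num.sqrt y ^+ 3 <= Num.sqrt (x + y) ^+ 3.
Proof.
move=> x0 y0.
have p0 := sqrtr_ge0 x; have q0 := sqrtr_ge0 y; have r0 := sqrtr_ge0 (x + y).
have hp : Num.sqrt x ^+ 2 = x by rewrite sqr_sqrtr.
have hq : Num.sqrt y ^+ 2 = y by rewrite sqr_sqrtr.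
have hr : Num.sqrt (x + y) ^+ 2 = x + y by rewrite sqr_sqrtr // addr_ge0.
have pr : Num.sqrt x <= Num.sqrt (x + y) by rewrite ler_sqrt ?addr_ge0 // lerDl.
have qr : Num.sqrt y <= Num.sqrt (x + y) by rewrite ler_sqrt ?addr_ge0 // lerDr.
move: hp hq hr pr qr p0 q0 r0.
set p := Num.sqrt x; set q := Num.sqrt y; set r := Num.sqrt (x + y).
move=> hp hq hr pr qr p0 q0 r0.
have h1 : 0 <= p ^+ 2 * (r - p) by apply: mulr_ge0; [exact: sqr_ge0 | lra].
have h2 : 0 <= q ^+ 2 * (r - q) by apply: mulr_ge0; [exact: sqr_ge0 | lra].
have -> : r ^+ 3 = r * (p ^+ 2 + q ^+ 2) by rewrite hp hq -hr; ring.
nra.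
Qed.

Lemma SCat_add f g : SCat f -> SCat g -> SCat (fun s => f s + g s).
Proof.
move=> [f1 [f2 [f3 [Hf [f20 f3b]]]]] [g1 [g2 [g3 [Hg [g20 g3b]]]]].
exists (fun s => f1 s + g1 s), (fun s => f2 s + g2 s), (fun s => f3 s + g3 s).
split; last split.
- apply: filterS2 Hf Hg => s [d1 [d2 d3]] [e1 [e2 e3]].
  split; last split.
  + exact: (is_deriveD d1 e1).
  + exact: (is_deriveD d2 e2).
  + exact: (is_deriveD d3 e3).
- exact: addr_ge0.
- apply: le_trans (ler_normD _ _) _.
  apply: le_trans (lerD f3b g3b) _.
  rewrite -mulrDr ler_pM2l //; exact: sqrt3_add.
Qed.

Lemma SCat0 : SCat (fun _ => 0).
Proof.
exists (fun _ => 0), (fun _ => 0), (fun _ => 0); split; last first.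
  by rewrite normr0 sqrtr0 expr0n /= mulr0.
near=> s; split; last split; exact: is_derive_cst.
Unshelve. all: by end_near.
Qed.

Lemma SCat_ext f g : (forall s, f s = g s) -> SCat f -> SCat g.
Proof. by move=> E; have -> : f = g by apply/funext. Qed.

Lemma SCat_sum k (F : 'I_k -> R -> R) : (forall i, SCat (F i)) ->
  SCat (fun s => \sum_(i < k) F i s).
Proof.
elim: k F => [|k IH] F HF.
  by apply: SCat_ext SCat0 => s; rewrite big_ord0.
have H := SCat_add (IH (fun i => F (widen_ord (leqnSn k) i)) (fun i => HF _)) (HF ord_max).
by apply: SCat_ext H => s; rewrite big_ord_recr.
Qed.

Lemma dk_sqrt (m : nat) (u : R) : 0 < u ->
  is_derive u 1 (fun x => (Num.sqrt x ^+ m)^-1)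
    (- (m%:R / 2) * (Num.sqrt u ^+ m.+2)^-1).
Proof.
move=> u0; have su : 0 < Num.sqrt u by rewrite sqrtr_gt0.
have D1 : is_derive u 1 (Num.sqrt ^+ m) ((m%:R * Num.sqrt u ^+ m.-1) *: (2 * Num.sqrt u)^-1).
  apply: is_deriveX; exact: is_derive1_sqrt.
rewrite exprfctE in D1.
have := is_deriveV _ D1.
rewrite expf_neq0 ?gt_eqF // => /(_ isT) D2.
apply: is_derive_eq D2 _.
have nz : Num.sqrt u != 0 by rewrite gt_eqF.
have sc : forall a b : R, a *: b = a * b by [].
case: m D1 => [|m] D1; rewrite !sc.
  by rewrite /=; field; rewrite ?nz ?pnatr_eq0.
have nz2 : Num.sqrt u ^+ m != 0 by rewrite expf_neq0.
rewrite /= !exprS.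
by field; rewrite ?nz ?nz2 ?pnatr_eq0.
Qed.

Lemma dk_pow (m : nat) (u : R) : 0 < u ->
  is_derive u 1 (fun x : R => (x ^+ m)^-1) (- m%:R * (u ^+ m.+1)^-1).
Proof.
move=> u0.
have D1 : is_derive u 1 ((@id R) ^+ m) ((m%:R * u ^+ m.-1) *: 1).
  apply: is_deriveX; exact: is_derive_id.
rewrite exprfctE in D1.
have := is_deriveV _ D1.
rewrite expf_neq0 ?gt_eqF // => /(_ isT) D2.
apply: is_derive_eq D2 _.
have nz : u != 0 by rewrite gt_eqF.
have sc : forall a b : R, a *: b = a * b by [].
case: m D1 => [|m] D1; rewrite !sc.
  by rewrite /=; field; rewrite ?nz ?pnatr_eq0.
have nz2 : u ^+ m != 0 by rewrite expf_neq0.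
rewrite /= !exprS.
by field; rewrite ?nz ?nz2 ?pnatr_eq0.
Qed.

Lemma pos_near (a c : R) : 0 < a -> \forall s \near (0:R), 0 < a + s * c.
Proof.
move=> a0.
have e0 : 0 < a / (`|c| + 1) by rewrite divr_gt0 // ltr_wpDl.
apply: filterS (nbhs0_lt e0) => s hs.
have c1 : 0 < `|c| + 1 by rewrite ltr_wpDl.
have h1 : `|s| * (`|c| + 1) < a by rewrite -ltr_pdivlMr.
have h2 : - (s * c) <= `|s| * `|c|.
  by rewrite -normrM; apply: (le_trans (ler_norm _)); rewrite normrN.
have h3 : 0 <= `|s| := normr_ge0 s.
nra.
Qed.

Lemma is_derive_affK (g : R -> R) (g' K a c s : R) :
  is_derive (a + s * c) 1 g g' ->
  is_derive s 1 (fun s => K * g (a + s * c)) (K * (c * g')).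
Proof.
move=> Dg.
have Da : is_derive s 1 (fun s => a + s * c) c.
  apply: is_derive_eq.
  rewrite add0r mul1r scaler0 add0r; exact: mulr1.
have := is_derive1_comp (f:=g) (g:=fun s => a + s * c) Dg Da.
move=> D; apply: is_derive_eq.
by rewrite [g' * c]mulrC.
Qed.

Lemma sc_of_sq (x y : R) : 0 <= x -> y ^+ 2 <= 4 * x ^+ 3 ->
  `|y| <= 2 * Num.sqrt x ^+ 3.
Proof.
move=> x0 h.
have hq : Num.sqrt x ^+ 2 = x by rewrite sqr_sqrtr.
have q0 := sqrtr_ge0 x.
move: h; rewrite -{1}hq -(real_normK (num_real y)).
have n0 := normr_ge0 y.
set q := Num.sqrt x; set z := `|y|.
move=> h.
rewrite leNgt; apply/negP => hlt.
have h3 : 0 <= 2 * q ^+ 3 by rewrite mulr_ge0 // exprn_ge0.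
have h4 : (2 * q ^+ 3) ^+ 2 < z ^+ 2.
  rewrite -subr_gt0.
  have -> : z ^+ 2 - (2 * q ^+ 3) ^+ 2 = (z - 2 * q ^+ 3) * (z + 2 * q ^+ 3) by ring.
  apply: mulr_gt0; lra.
have h5 : 4 * (q ^+ 2) ^+ 3 = (2 * q ^+ 3) ^+ 2 by ring.
lra.
Qed.

Lemma SCat_ln a c : 0 < a -> SCat (fun s => - ln (a + s * c)).
Proof.
move=> a0.
exists (fun s => (- c) * ((a + s * c) ^+ 1)^-1),
       (fun s => (c ^+ 2) * ((a + s * c) ^+ 2)^-1),
       (fun s => (- (2 * c ^+ 3)) * ((a + s * c) ^+ 3)^-1).
split; last split.
- apply: filterS (pos_near c a0) => s u0.
  have nz : a + s * c != 0 by rewrite gt_eqF.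
  split; last split.
  + have E : (fun s => - ln (a + s * c)) = (fun s => (-1) * ln (a + s * c)).
      by apply/funext => x; rewrite mulN1r.
    rewrite E; apply: (is_derive_eq (is_derive_affK (-1) (is_derive1_ln u0))).
    by rewrite expr1; field.
  + apply: (is_derive_eq (is_derive_affK (-c) (dk_pow 1 u0))).
    by field; rewrite ?nz ?expf_neq0 ?nz.
  + apply: (is_derive_eq (is_derive_affK (c^+2) (dk_pow 2 u0))).
    by field; rewrite ?nz ?expf_neq0 ?nz.
- by rewrite mul0r addr0 mulr_ge0 // ?sqr_ge0 // invr_ge0 exprn_ge0 // ltW.
- apply: sc_of_sq.
    by rewrite mul0r addr0 mulr_ge0 // ?sqr_ge0 // invr_ge0 exprn_ge0 // ltW.
  have nz : a != 0 by rewrite gt_eqF.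
  rewrite !mul0r !addr0 le_eqVlt; apply/orP; left; apply/eqP.
  by field; rewrite ?expf_neq0.
Qed.

Lemma SCat_sqrt (w a c : R) : 0 < a -> 0 <= w -> 81 <= 16 * w ^+ 2 * a ->
  SCat (fun s => - (w * Num.sqrt (a + s * c))).
Proof.
move=> a0 w0 wa.
exists (fun s => (- (w * c / 2)) * (Num.sqrt (a + s * c) ^+ 1)^-1),
       (fun s => (w * c ^+ 2 / 4) * (Num.sqrt (a + s * c) ^+ 3)^-1),
       (fun s => (- (3 * w * c ^+ 3 / 8)) * (Num.sqrt (a + s * c) ^+ 5)^-1).
split.
- apply: filterS (pos_near c a0) => s u0.
  have nz : Num.sqrt (a + s * c) != 0 by rewrite gt_eqF // sqrtr_gt0.
  split; last split.
  + have E : (fun s => - (w * Num.sqrt (a + s * c))) = (fun s => (- w) * Num.sqrt (a + s * c)).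
      by apply/funext => x; rewrite mulNr.
    rewrite E; apply: (is_derive_eq (is_derive_affK (- w) (is_derive1_sqrt u0))).
    by rewrite expr1; field.
  + apply: (is_derive_eq (is_derive_affK (- (w * c / 2)) (dk_sqrt 1 u0))).
    by field; rewrite ?nz ?expf_neq0 ?nz.
  + apply: (is_derive_eq (is_derive_affK (w * c ^+ 2 / 4) (dk_sqrt 3 u0))).
    by field; rewrite ?nz ?expf_neq0 ?nz.
- rewrite !mul0r !addr0.
  have r0 : 0 < Num.sqrt a by rewrite sqrtr_gt0.
  have ra : Num.sqrt a ^+ 2 = a by rewrite sqr_sqrtr // ltW.
  move: ra r0; set r := Num.sqrt a => ra r0.
  have nz : r != 0 by rewrite gt_eqF.
  have key : 9 <= 4 * w * r.
    have h0 : 0 <= 4 * w * r by rewrite mulr_ge0 // ?mulr_ge0 // ltW.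
    rewrite -ra in wa; nra.
  have f20 : 0 <= w * c ^+ 2 / 4 / r ^+ 3.
    apply: mulr_ge0; last by rewrite invr_ge0 exprn_ge0 // ltW.
    apply: mulr_ge0; last by rewrite invr_ge0.
    by apply: mulr_ge0 => //; exact: sqr_ge0.
  split; first exact: f20.
  apply: sc_of_sq; first exact: f20.
  rewrite -subr_ge0.
  have -> : 4 * (w * c ^+ 2 / 4 / r ^+ 3) ^+ 3 - (- (3 * w * c ^+ 3 / 8) / r ^+ 5) ^+ 2
      = (w ^+ 2 * c ^+ 6 / (64 * r ^+ 10)) * (4 * w * r - 9).
    by field.
  apply: mulr_ge0; last lra.
  apply: mulr_ge0; last by rewrite invr_ge0 mulr_ge0 // exprn_ge0 // ltW.
  by apply: mulr_ge0; apply: exprn_even_ge0.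
Qed.

Lemma SCat_dir d (G : ('I_d -> R) -> R) z h : SCat (line_fun G z h) ->
  [/\ derivable (line_fun G z h) 0 1,
      derivable (derive1 (line_fun G z h)) 0 1,
      derivable (derive1 (derive1 (line_fun G z h))) 0 1 &
      `| dirD3 G z h | <= 2 * (Num.sqrt (dirD2 G z h)) ^+ 3].
Proof.
move=> [f1 [f2 [f3 [HD [_ Hi]]]]]; have [d1 d2 d3 E2 E3] := D3_sc HD.
by split => //; rewrite /dirD3 /dirD2 E2 E3.
Qed.

Lemma le_sum_norm k (f : 'I_k -> R) i : f i <= \sum_j `|f j|.
Proof.
rewrite (bigD1 i) //=; apply: le_trans (ler_norm _) _; rewrite lerDl.
by apply: sumr_ge0 => j _; exact: normr_ge0.
Qed.

Lemma le_sum_nneg k (f : 'I_k -> R) i : (forall j, 0 <= f j) -> f i <= \sum_j f j.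
Proof.
move=> f0; rewrite (bigD1 i) //= lerDl.
by apply: sumr_ge0 => j _; exact: f0.
Qed.

Section Main.
Variables (n : nat) (b lam : 'I_n.+1 -> R).
Hypothesis bnz : b <> (fun _ => 0).
Hypothesis lam0 : forall i, 0 < lam i.

Lemma lam_inv_gt0 i : 0 < (lam i)^-1.
Proof. by rewrite invr_gt0. Qed.

Lemma exI : exists i, b i != 0.
Proof.
apply/not_existsP => H; apply: bnz; apply/funext => i.
by have /negP := H i; rewrite negbK => /eqP.
Qed.

Lemma Bc_ge0 i : 0 <= Bc b lam i.
Proof. by rewrite /Bc mulr_ge0 ?sqr_ge0 // invr_ge0 sqr_ge0. Qed.

Lemma Bc_gt0 i : b i != 0 -> 0 < Bc b lam i.
Proof.
move=> bi; rewrite /Bc mulr_gt0 //.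
  by rewrite exprn_even_gt0 //= bi orbT.
rewrite invr_gt0 exprn_gt0 // ltr_wpDl ?sqrtr_ge0 //.
by rewrite invr_gt0 sqrtr_gt0.
Qed.

Lemma t_bounds t : t0 b lam <= t ->
  (forall i, b i != 0 -> 9 <= t * Num.sqrt (b i ^+ 2 * Bc b lam i)) /\
  (forall L, 0 < L -> (forall i, b i != 0 -> (lam i)^-1 * Bc b lam i <= L) ->
     9 <= t * Num.sqrt L).
Proof.
move=> tt0.
set S1 := [set (Num.sqrt (b i ^+ 2 * Bc b lam i))^-1 | i in Iset b].
set S2 := [set (Num.sqrt ((lam i)^-1 * Bc b lam i))^-1 | i in Iset b].
have [i0 bi0] := exI.
have h1 : 9 * sup S1 <= t.
  apply: le_trans tt0; rewrite /t0 -/S1 -/S2 ler_pM2l //.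
  by rewrite le_max lexx.
have h2 : 9 * inf S2 <= t.
  apply: le_trans tt0; rewrite /t0 -/S1 -/S2 ler_pM2l //.
  by rewrite le_max lexx orbT.
split.
- move=> i bi.
  have q0 : 0 < Num.sqrt (b i ^+ 2 * Bc b lam i).
    by rewrite sqrtr_gt0 mulr_gt0 ?Bc_gt0 // exprn_even_gt0 //= bi orbT.
  have hub : has_ubound S1.
    exists (\sum_j `|(Num.sqrt (b j ^+ 2 * Bc b lam j))^-1|).
    by move=> _ [j _ <-]; exact: (le_sum_norm (fun j => (Num.sqrt (b j ^+ 2 * Bc b lam j))^-1)).
  have hx : (Num.sqrt (b i ^+ 2 * Bc b lam i))^-1 <= sup S1.
    by apply: ub_le_sup => //; exists i.
  move: q0 hx h1; set q := Num.sqrt _ => q0 hx h1.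
  have H0 : 9 * q^-1 <= t by apply: le_trans h1; rewrite ler_pM2l.
  have H : 9 * q^-1 * q <= t * q by rewrite ler_pM2r.
  by rewrite mulrAC -mulrA divff ?gt_eqF // mulr1 in H.
- move=> L L0 hL.
  have hlb : (Num.sqrt L)^-1 <= inf S2.
    apply: lb_le_inf; first by exists (Num.sqrt ((lam i0)^-1 * Bc b lam i0))^-1, i0.
    move=> _ [j bj <-].
    have p0 : 0 < (lam j)^-1 * Bc b lam j by rewrite mulr_gt0 ?invr_gt0 ?Bc_gt0.
    rewrite lef_pV2 ?posrE ?sqrtr_gt0 //.
    by rewrite ler_sqrt ?(ltW L0) // hL.
  have sL : 0 < Num.sqrt L by rewrite sqrtr_gt0.
  have H0 : 9 * (Num.sqrt L)^-1 <= t.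
    by apply: le_trans h2; rewrite ler_pM2l.
  have H : 9 * (Num.sqrt L)^-1 * Num.sqrt L <= t * Num.sqrt L by rewrite ler_pM2r.
  by rewrite mulrAC -mulrA divff ?gt_eqF // mulr1 in H.
Qed.

Lemma t_pos t : t0 b lam <= t -> 0 < t.
Proof.
move=> tt0; have [hb _] := t_bounds tt0; have [i0 bi0] := exI.
have q0 : 0 < Num.sqrt (b i0 ^+ 2 * Bc b lam i0).
  by rewrite sqrtr_gt0 mulr_gt0 ?Bc_gt0 // exprn_even_gt0 //= bi0 orbT.
have := hb i0 bi0; move: q0; set q := Num.sqrt _ => q0 h.
rewrite ltNge; apply/negP => tle.
have : t * q <= 0 by rewrite mulr_le0_ge0 // ltW.
lra.
Qed.

Lemma sc_part t : t0 b lam <= t -> sc_inequality (Ft b lam t) (DF b lam).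
Proof.
move=> tt0 z [zB zs] h.
have [hb hL] := t_bounds tt0.
have [i0 bi0] := exI.
have tp := t_pos tt0.
have z0 : forall i, 0 < z i by move=> i; exact: le_lt_trans (Bc_ge0 i) (zB i).
set L := \sum_i (lam i)^-1 * z i.
set C := \sum_i (lam i)^-1 * h i.
have Lz : forall i, (lam i)^-1 * z i <= L.
  move=> i; apply: (le_sum_nneg (f:=fun j => (lam j)^-1 * z j)) => j.
  by rewrite mulr_ge0 // ?invr_ge0 ltW.
have L0 : 0 < L.
  by apply: lt_le_trans (Lz i0); rewrite mulr_gt0 ?invr_gt0.
have HA : SCat (fun s => \sum_i - ((t * `|b i|) * Num.sqrt (z i + s * h i))).
  apply: SCat_sum => i.
  have [bi0'|bi] := eqVneq (b i) 0.
    by apply: SCat_ext SCat0 => s; rewrite bi0' normr0 mulr0 mul0r oppr0.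
  apply: SCat_sqrt => //; first by rewrite mulr_ge0 // ltW.
  have := hb i bi.
  rewrite sqrtrM ?sqr_ge0 // sqrtr_sqr.
  have u0 := sqrtr_ge0 (Bc b lam i).
  have uB : Num.sqrt (Bc b lam i) ^+ 2 = Bc b lam i by rewrite sqr_sqrtr // Bc_ge0.
  have zi := zB i.
  move: u0 uB zi; set u := Num.sqrt _; set B := Bc b lam i => u0 uB zi h9.
  have bn := normr_ge0 (b i).
  have X0 : 81 <= (t * (`|b i| * u)) ^+ 2 by nra.
  have X1 : (t * (`|b i| * u)) ^+ 2 <= (t * `|b i|) ^+ 2 * z i.
    have -> : (t * (`|b i| * u)) ^+ 2 = (t * `|b i|) ^+ 2 * u ^+ 2 by ring.
    by rewrite ler_wpM2l ?sqr_ge0 // uB ltW.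
  have X2 : 0 <= (t * `|b i|) ^+ 2 * z i by rewrite mulr_ge0 ?sqr_ge0 // ltW.
  lra.
have HB : SCat (fun s => - (t * Num.sqrt (L + s * C))).
  apply: SCat_sqrt => //; first exact: ltW.
  have h9 := hL L L0 (fun i _ => le_trans (ler_wpM2l (ltW (lam_inv_gt0 i)) (ltW (zB i))) (Lz i)).
  have sL : Num.sqrt L ^+ 2 = L by rewrite sqr_sqrtr // ltW.
  have X0 : 81 <= (t * Num.sqrt L) ^+ 2 by nra.
  rewrite exprMn sL in X0; lra.
have HC : SCat (fun s => \sum_i - ln ((z i - Bc b lam i) + s * h i)).
  by apply: SCat_sum => i; apply: SCat_ln; rewrite subr_gt0.
have HD : SCat (fun s => - ln ((1 - \sum_i z i) + s * (- \sum_i h i))).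
  by apply: SCat_ln; rewrite subr_gt0.
have H := SCat_add (SCat_add (SCat_add HA HB) HC) HD.
have Hl : SCat (line_fun (Ft b lam t) z h).
  apply: SCat_ext H => s /=.
  rewrite /line_fun /Ft /Fobj /=.
  have E1 : \sum_i (lam i)^-1 * (z i + s * h i) = L + s * C.
    by rewrite /L /C mulr_sumr -big_split /=; apply: eq_bigr => i _; ring.
  have E2 : \sum_i (z i + s * h i) = \sum_i z i + s * \sum_i h i.
    by rewrite mulr_sumr -big_split.
  have E3 : \sum_i (t * `|b i|) * Num.sqrt (z i + s * h i)
      = t * \sum_i `|b i| * Num.sqrt (z i + s * h i).
    by rewrite mulr_sumr; apply: eq_bigr => i _; rewrite mulrA.
  have E4 : \sum_i ln ((z i - Bc b lam i) + s * h i)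
      = \sum_i ln (z i + s * h i - Bc b lam i).
    by apply: eq_bigr => i _; rewrite addrAC.
  have E5 : 1 - (\sum_i z i + s * \sum_i h i) = (1 - \sum_i z i) + s * (- \sum_i h i).
    by ring.
  rewrite !sumrN E3 E4 E1 E2 E5; ring.
exact: SCat_dir Hl.
Qed.

Lemma boundary_case (p : 'I_n.+1 -> R) : ~ in_interior (DF b lam) p ->
  (exists i, p i <= Bc b lam i) \/ 1 <= \sum_i p i.
Proof.
move=> pni.
have [[i hi]|H1] := pselect (exists i, p i <= Bc b lam i); first by left; exists i.
right; rewrite leNgt; apply/negP => ps.
have hd : forall i, 0 < p i - Bc b lam i.
  move=> i; rewrite subr_gt0 ltNge; apply/negP => hi; apply: H1; by exists i.
have g0 : 0 < 1 - \sum_i p i by rewrite subr_gt0.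
set S := \sum_i (p i - Bc b lam i)^-1 + n.+1%:R / (1 - \sum_i p i).
have Sge1 : forall i, (p i - Bc b lam i)^-1 <= S.
  move=> i; apply: (le_trans (y := \sum_j (p j - Bc b lam j)^-1)); last first.
    by rewrite /S lerDl divr_ge0 // ltW.
  by apply: (le_sum_nneg (f:=fun j => (p j - Bc b lam j)^-1)) => j; rewrite invr_ge0 ltW.
have Sge2 : n.+1%:R / (1 - \sum_i p i) <= S.
  rewrite /S lerDr; apply: sumr_ge0 => j _; by rewrite invr_ge0 ltW.
have S0 : 0 < S by apply: lt_le_trans Sge2; rewrite divr_gt0.
apply: pni; exists S^-1; first by rewrite invr_gt0.
move=> z hz; split.
- move=> i.
  have e1 : S^-1 <= p i - Bc b lam i.
    by rewrite -[X in _ <= X]invrK lef_pV2 ?posrE ?invr_gt0.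
  have := hz i; rewrite ltr_norml => /andP[h1 _]; lra.
- have e2 : n.+1%:R * S^-1 <= 1 - \sum_i p i.
    rewrite -ler_pdivlMl ?ltr0n // -[X in _ <= X]invrK lef_pV2 ?posrE ?invr_gt0 ?divr_gt0 ?ltr0n //.
    by rewrite invfM invrK.
  by rewrite mulr_gt0 ?invr_gt0 ?ltr0n.
  have e3 : \sum_i (z i - p i) < \sum_(i < n.+1) S^-1.
    apply: ltr_sum; first by apply/hasP; exists ord0; rewrite ?mem_index_enum.
    by move=> i _; apply: le_lt_trans (ler_norm _) (hz i).
  rewrite sumr_const card_ord sumrB -mulr_natl in e3.
  lra.
Qed.

Lemma blow_part t : 0 <= t -> blowup_at_boundary (Ft b lam t) (DF b lam).
Proof.
move=> tp p _ pni M.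
set K := t * (\sum_i `|b i| + Num.sqrt (\sum_i (lam i)^-1)).
set e := expR (- (M + K)).
have e0 : 0 < e by exact: expR_gt0.
exists (e / n.+1%:R); first by rewrite divr_gt0 ?ltr0n.
move=> z [zB zs] hz.
have z0 : forall i, 0 <= z i by move=> i; exact: ltW (le_lt_trans (Bc_ge0 i) (zB i)).
have z1 : forall i, z i <= 1.
  move=> i; apply: le_trans (ltW zs).
  exact: (le_sum_nneg (f:=z)).
have sz0 : 0 <= \sum_i z i by apply: sumr_ge0.
have HF : - K <= t * Fobj b lam z.
  rewrite /K /Fobj -mulrN ler_wpM2l // opprD lerB //.
  - rewrite lerN2; apply: ler_sum => i _.
    rewrite -[X in _ <= X]mulr1 ler_wpM2l //.
    by rewrite -sqrtr1 ler_sqrt.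
  - rewrite ler_sqrt ?sumr_ge0 // => [|i _]; last by rewrite invr_ge0 ltW.
    apply: ler_sum => i _; rewrite -[X in _ <= X]mulr1 ler_wpM2l //.
    by rewrite invr_ge0 ltW.
have Hln : forall w, 0 < w -> w < e -> M + K < - ln w.
  move=> w w0 we.
  have : ln w < ln e by rewrite ltr_ln ?posrE.
  rewrite /e expRK; lra.
have HL1 : forall i, 0 <= - ln (z i - Bc b lam i).
  move=> i; rewrite oppr_ge0 ln_le0 //.
  have := Bc_ge0 i; have := z1 i; lra.
have HL2 : 0 <= - ln (1 - \sum_i z i).
  by rewrite oppr_ge0 ln_le0 // lerBlDr lerDl.
have en : e / n.+1%:R <= e.
  by rewrite ler_pdivrMr ?ltr0n // ler_peMr ?(ltW e0) // (ler_nat R 1 n.+1).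
rewrite /Ft.
case: (boundary_case pni) => [[i hi]|hs].
- have w0 : 0 < z i - Bc b lam i by rewrite subr_gt0.
  have we : z i - Bc b lam i < e.
    have := hz i; rewrite ltr_norml => /andP[_ h2]; move: en h2; generalize (e / n.+1%:R) => E en h2; lra.
  have := Hln _ w0 we.
  have := le_sum_nneg (f:=fun j => - ln (z j - Bc b lam j)) i HL1.
  rewrite sumrN => hsum hM.
  lra.
- have w0 : 0 < 1 - \sum_i z i by rewrite subr_gt0.
  have we : 1 - \sum_i z i < e.
    have e3 : \sum_i (p i - z i) < \sum_(i < n.+1) (e / n.+1%:R).
      apply: ltr_sum; first by apply/hasP; exists ord0; rewrite ?mem_index_enum.
      by move=> i _; apply: le_lt_trans (ler_norm _) _; rewrite distrC; exact: hz.
    rewrite sumr_const card_ord sumrB in e3.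
    have hE : e / n.+1%:R *+ n.+1 = e by rewrite -mulr_natr divfK // pnatr_eq0.
    rewrite hE in e3; lra.
  have := Hln _ w0 we.
  have : 0 <= - \sum_i ln (z i - Bc b lam i).
    by rewrite -sumrN; apply: sumr_ge0 => i _; exact: HL1.
  lra.
Qed.
End Main.
End Aux.

End Helpers.

Theorem lemma2 (R : realType) (n : nat) (b lam : 'I_n.+1 -> R) :
  b <> (fun _ => 0) ->
  (forall i j : 'I_n.+1, (i <= j)%N -> lam j <= lam i) ->
  (forall i, 0 < lam i) ->
  forall t : R, t0 b lam <= t -> self_concordant (Ft b lam t) (DF b lam).
Proof.
move=> bnz _ lam0 t tt0; split.
- exact: (Helpers.sc_part bnz lam0 tt0).
- exact: (Helpers.blow_part lam0 (ltW (Helpers.t_pos bnz lam0 tt0))).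
Qed.
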